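(* For $n=0,1,2,\ldots$ let $R_n=\sum_{k=0}^n\binom{n}{k}\binom{n+k}{k}\frac{1}{2k-1}$. The sequence $\{R_n\}_{n=4}^\infty$ is strictly log-convex; equivalently, the sequence $\{R_{n+1}/R_n\}_{n=3}^\infty$ is strictly increasing.
   Context: A sequence $\{z_n\}$ of positive numbers is strictly log-convex if $z_{n-1}z_{n+1}>z_n^2$ for all indices $n$ for which $z_{n-1},z_n,z_{n+1}$ belong to the sequence. *)

(* Defs.v *)
From mathcomp Require Import all_boot all_order all_algebra.
Set Implicit Arguments. Unset Strict Implicit. Unset Printing Implicit Defensive.
Import Order.TTheory GRing.Theory Num.Theory.
Local Open Scope ring_scope.

Definition Rseq (n : nat) : rat :=
  \sum_(0 <= k < n.+1) ('C(n, k) * 'C(n + k, k))%:R / ((2 * k)%:R - 1).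

Definition strictly_log_convex_from (m : nat) (z : nat -> rat) : Prop :=
  (forall n, (m <= n)%N -> 0 < z n) /\
  (forall n, (m < n)%N -> z n ^+ 2 < z n.-1 * z n.+1).

(* Main.v *)
Require Import Defs.
From mathcomp Require Import all_boot all_order all_algebra.
From mathcomp Require Import ring lra zify.
Import Order.TTheory GRing.Theory Num.Theory.
Local Open Scope ring_scope.

Definition An (n k : nat) : nat := 'C(n, k) * 'C(n + k, k).

Lemma A1 n k : ((n.+1 - k) * An n.+1 k = (n.+1 + k) * An n k)%N.
Proof.
rewrite /An.
have h1 : (n.+1 * 'C(n, k) = (n.+1 - k) * 'C(n.+1, k))%N by rewrite -mul_bin_down.
have h2 : ((n + k).+1 * 'C(n + k, k) = (n.+1) * 'C((n + k).+1, k))%N.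
  rewrite mul_bin_down; congr (_ * _)%N; lia.
rewrite mulnA -h1.
rewrite addSn -mulnA [X in (_ = X)%N]mulnCA (mulnA _ _ (binomial _ _)) h2 !mulnA; congr (_ * _)%N; lia.
Qed.

Lemma A2 m k : ((k.+1 * k.+1) * An m k.+1 = (m - k) * (m + k).+1 * An m k)%N.
Proof.
rewrite /An.
have h1 := mul_bin_left m k.
have h2 : ((m + k).+1 * 'C(m + k, k) = k.+1 * 'C((m + k).+1, k.+1))%N by rewrite -mul_bin_diag.
rewrite mulnACA [RHS]mulnACA h1 h2 addnS.
by [].
Qed.

Definition Ar (n k : nat) : rat := (An n k)%:R.

Lemma An_small n k : (n < k)%N -> An n k = 0%N.
Proof. by move=> h; rewrite /An bin_small. Qed.

Lemma A1r n k : ((n.+1 - k)%N)%:R * Ar n.+1 k = (n.+1 + k)%:R * Ar n k.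
Proof. by rewrite /Ar -!natrM A1. Qed.

Lemma A2r m k : ((k.+1 * k.+1)%N)%:R * Ar m k.+1 = ((m - k) * (m + k).+1)%N%:R * Ar m k.
Proof. by rewrite /Ar -!natrM A2. Qed.

Lemma delannoy_term n j : (j <= n.+1)%N ->
  (n.+2)%:R * Ar n.+2 j.+1 + (n.+1)%:R * Ar n j.+1 =
  ((2 * n + 3)%N)%:R * Ar n.+1 j.+1 + ((4 * n + 6)%N)%:R * Ar n.+1 j.
Proof.
rewrite leq_eqVlt => /orP[/eqP ->|].
  have h0 : Ar n n.+2 = 0 by rewrite /Ar An_small.
  have h1 : Ar n.+1 n.+2 = 0 by rewrite /Ar An_small.
  rewrite h0 h1 !mulr0 addr0 add0r.
  have e1 := A2r n.+2 n.+1. have e2 := A1r n.+1 n.+1.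
  rewrite subSnn mul1r in e2.
  rewrite e2 subSnn mul1n in e1.
  have hn : ((n.+2 * n.+2)%N)%:R != 0 :> rat by rewrite pnatr_eq0.
  apply: (mulfI hn). rewrite mulrCA e1.

  ring.
rewrite ltnS => /subnK <-.
move: (n - j)%N => d.
have e1 := A1r (d + j).+1 j.+1.
have e2 := A1r (d + j) j.+1.
have e3 := A2r (d + j).+1 j.
rewrite subSS in e1. rewrite subSS in e2. rewrite subSn ?leq_addl // in e3.
rewrite addnK in e1 e2 e3. rewrite subSn ?leq_addl // addnK in e1.
set X := Ar _ j.+1 in e1 *. set c := Ar (d+j).+1 j.+1 in e1 e2 e3 *.
set Y := Ar (d+j) j.+1 in e2 *. set Z := Ar (d+j).+1 j in e3 *.

have p1 : d.+1%:R != 0 :> rat by rewrite pnatr_eq0.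
have p2 : ((d + j).+1 + j.+1)%:R != 0 :> rat by rewrite pnatr_eq0 addnS.
have p3 : ((d.+1 * ((d + j).+1 + j).+1))%:R != 0 :> rat by rewrite pnatr_eq0 muln_eq0.
have hX : X = ((d + j).+2 + j.+1)%:R * c / d.+1%:R.
  by apply: (mulfI p1); rewrite e1 [RHS]mulrC divfK.
have hY : Y = d%:R * c / ((d + j).+1 + j.+1)%:R.
  by apply: (mulfI p2); rewrite -e2 [RHS]mulrC divfK.
have hZ : Z = (j.+1 * j.+1)%:R * c / (d.+1 * ((d + j).+1 + j).+1)%:R.
  by apply: (mulfI p3); rewrite -e3 [RHS]mulrC divfK.
rewrite hX hY hZ.
field.
have hd : 0 <= d%:R :> rat by rewrite ler0n.
have hj : 0 <= j%:R :> rat by rewrite ler0n.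
apply/andP; split; rewrite gt_eqF //; lra.
Qed.

Lemma Ar0 m : Ar m 0 = 1.
Proof. by rewrite /Ar /An !bin0. Qed.

Definition D (n : nat) : rat := \sum_(0 <= k < n.+1) Ar n k.

Lemma Dext n N : (n < N)%N -> D n = \sum_(0 <= k < N) Ar n k.
Proof.
move=> h; rewrite /D [RHS](big_cat_nat _ (n := n.+1)) //=.
rewrite [X in _ + X]big_nat_cond [X in _ + X]big1 ?addr0 // => k /andP[/andP[hk _] _].
by rewrite /Ar An_small.
Qed.

Lemma Drec n : (n.+2)%:R * D n.+2 + (n.+1)%:R * D n = ((6 * n + 9)%N)%:R * D n.+1.
Proof.
transitivity (((2 * n + 3)%N)%:R * \sum_(0 <= k < n.+3) Ar n.+1 k + ((4 * n + 6)%N)%:R * D n.+1).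
  rewrite (Dext n n.+3); last lia.
  rewrite /D !mulr_sumr -!big_split /=.
  rewrite [LHS]big_nat_recl // [X in _ = X + _]big_nat_recl //.
  rewrite (eq_big_nat _ _ (F2 := fun j => ((2 * n + 3)%N)%:R * Ar n.+1 j.+1 + ((4 * n + 6)%N)%:R * Ar n.+1 j)).
    have h0 : forall m, Ar m 0 = 1 by move=> m; rewrite /Ar /An !bin0.
    rewrite big_split /= !h0. 
    rewrite -!mulr_sumr. ring.
  move=> j /andP[_ hj]; apply: delannoy_term; by [].
rewrite -(Dext n.+1 n.+3); last lia.
rewrite -mulrDl -natrD; congr (_%:R * _); lia.
Qed.

Lemma den_neq0 k : (2 * k)%:R - 1 != 0 :> rat.
Proof.
rewrite subr_eq0 -[1]/(1%:R) eqr_nat; apply/eqP; lia.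
Qed.

Lemma Rterm n k : (k <= n.+1)%N ->
  (2 * n + 1)%:R * (Ar n.+1 k / ((2 * k)%:R - 1)) =
  (2 * n + 3)%:R * (Ar n k / ((2 * k)%:R - 1)) + Ar n k + Ar n.+1 k.
Proof.
move=> hk.
have e := A1r n k. rewrite natrB // in e.
have hc := den_neq0 k.
apply/eqP; rewrite -subr_eq0.
have -> : (2 * n + 1)%:R * (Ar n.+1 k / ((2 * k)%:R - 1)) -
  ((2 * n + 3)%:R * (Ar n k / ((2 * k)%:R - 1)) + Ar n k + Ar n.+1 k)
  = 2 * ((n.+1%:R - k%:R) * Ar n.+1 k - (n.+1 + k)%:R * Ar n k) / ((2 * k)%:R - 1) :> rat.
  rewrite ?natrD ?natrM. field.
  by move: hc; rewrite mul2n -addnn natrD.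
have -> : (n.+1%:R - k%:R) * Ar n.+1 k = (n.+1 + k)%:R * Ar n k := e.
by rewrite subrr mulr0 mul0r.

Qed.

Lemma Rseq_ext n N : (n < N)%N ->
  Rseq n = \sum_(0 <= k < N) Ar n k / ((2 * k)%:R - 1).
Proof.
move=> h; rewrite /Rseq [RHS](big_cat_nat _ (n := n.+1)) //=.
rewrite [X in _ + X]big_nat_cond [X in _ + X]big1 ?addr0 // => k /andP[/andP[hk _] _].
by rewrite /Ar An_small // mul0r.
Qed.

Lemma Rrel n : (2 * n + 1)%:R * Rseq n.+1 = (2 * n + 3)%:R * Rseq n + D n + D n.+1.
Proof.
rewrite (Rseq_ext n n.+2) // (Dext n n.+2) // /Rseq /D.
rewrite !mulr_sumr -!big_split /=.
apply: eq_big_nat => k /andP[_ hk]; exact: Rterm.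
Qed.

Lemma xstep n (t s : rat) : 3 <= t -> t <= s ->
  (((6*n+9)%N)%:R - (n.+1)%:R / t) / (n.+2)%:R <= (((6*n.+1+9)%N)%:R - (n.+2)%:R / s) / (n.+3)%:R.
Proof.
move=> ht hts.
have hN : 0 <= n%:R :> rat by rewrite ler0n.
have hs : 0 < s by lra.
have hp : t^-1 <= 3^-1. by rewrite lef_pV2 ?posrE //; lra.
have hq : s^-1 <= t^-1. by rewrite lef_pV2 ?posrE //; lra.
have hq0 : 0 < s^-1 by rewrite invr_gt0.
rewrite ler_pdivrMr ?ltr0n // mulrAC ler_pdivlMr ?ltr0n //.
have h3 : 3^-1 * 3 = 1 :> rat by rewrite mulVf.
nra.
Qed.

Lemma Dpos n : 0 < D n.
Proof.
rewrite /D big_nat_recl // Ar0.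
have : 0 <= \sum_(0 <= i < n) Ar n i.+1 by apply: sumr_ge0 => i _; rewrite /Ar ler0n.
lra.
Qed.

Lemma D0 : D 0 = 1. Proof. by rewrite /D big_nat1 /Ar /An. Qed.
Lemma D1 : D 1 = 3%:R. Proof. by rewrite /D big_nat_recr //= big_nat1 /Ar /An -natrD. Qed.
Lemma R0 : Rseq 0 = -1.
Proof. rewrite /Rseq big_nat1 /= sub0r invrN invr1 mulrN1. by []. Qed.

Lemma Drec' n : D n.+2 = (((6*n+9)%N)%:R * D n.+1 - (n.+1)%:R * D n) / (n.+2)%:R.
Proof.
have h := Drec n.
have hn : (n.+2)%:R != 0 :> rat by rewrite pnatr_eq0.
apply: (mulIf hn); rewrite divfK // -h; ring.
Qed.

Definition x n := D n.+1 / D n.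

Lemma xrec n : x n.+1 = (((6*n+9)%N)%:R - (n.+1)%:R / x n) / (n.+2)%:R.
Proof.
rewrite /x Drec'.
have h0 := Dpos n. have h1 := Dpos n.+1.
have hn : (n.+2)%:R != 0 :> rat by rewrite pnatr_eq0.
field.
have hN : 0 <= n%:R :> rat by rewrite ler0n.
by rewrite !gt_eqF //; lra.
Qed.

Lemma xmono n : 3%:R <= x n /\ x n <= x n.+1.
Proof.
elim: n => [|n [IH1 IH2]].
  have hx0 : x 0 = 3%:R by rewrite /x D1 D0 divr1.
  have hx1 : x 1 = 13%:R / 3%:R by rewrite xrec hx0; field.
  rewrite hx1 hx0; split; first by [].
  by rewrite ler_pdivlMr ?ltr0n // -natrM ler_nat.
split; first lra.
rewrite (xrec n.+1) [X in X <= _]xrec.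
apply: xstep => //; lra.
Qed.


Lemma concave_pos (a u E e T : rat) : 0 < a -> 0 < u -> 2 < E ->
  4 * E ^+ 2 < a * (E - 1) * (e - E) -> 2 * a + 16 < a * e ->
  T <= E * u -> u * (E * u) <= T * (E * u - u) ->
  (a + 4) * (T + E * u) ^+ 2 < a * (T * (T + E * u + e * (E * u))).
Proof.
move=> ha hu hE hclo hchi hT1 hT2.
pose f X := a * (X * (X + E * u + e * (E * u))) - (a + 4) * (X + E * u) ^+ 2.
suff : 0 < f T by rewrite /f subr_gt0.
pose lo := E * u / (E - 1). pose hi := E * u.
have hE1 : E - 1 != 0 by rewrite gt_eqF //; lra.
have flo : f lo = (E * u) ^+ 2 * (a * (E - 1) * (e - E) - 4 * E ^+ 2) / (E - 1) ^+ 2.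
  rewrite /f /lo; field; exact: hE1.
have fhi : f hi = (E * u) ^+ 2 * (a * e - 2 * a - 16).
  rewrite /f /hi; ring.
have Eu : 0 < E * u by apply: mulr_gt0 => //; lra.
have flo0 : 0 < f lo.
  rewrite flo; apply: divr_gt0; last by apply: exprn_gt0; lra.
  apply: mulr_gt0; [exact: exprn_gt0 Eu | lra].
have fhi0 : 0 < f hi.
  rewrite fhi; apply: mulr_gt0; [exact: exprn_gt0 Eu | lra].
have hloT : lo <= T.
  rewrite /lo ler_pdivrMr; last lra.
  nra.
have hlohi : lo < hi.
  rewrite /lo /hi ltr_pdivrMr; last lra.
  nra.
have id : f T * (hi - lo) = (hi - T) * f lo + (T - lo) * f hi + 4 * (T - lo) * (hi - T) * (hi - lo).
  rewrite /f /hi; ring.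
have hTh : T <= hi := hT1.
have : 0 < f T * (hi - lo).
  rewrite id.
  have h1 : 0 <= (hi - T) * f lo by apply: mulr_ge0; [lra | exact: ltW flo0].
  have h2 : 0 <= (T - lo) * f hi by apply: mulr_ge0; [lra | exact: ltW fhi0].
  have h3 : 0 <= 4 * (T - lo) * (hi - T) * (hi - lo).
    apply: mulr_ge0; [apply: mulr_ge0; [apply: mulr_ge0|]|]; lra.
  have : 0 < (hi - T) * f lo + (T - lo) * f hi.
    case: (ltrP T hi) => h.
      have : 0 < (hi - T) * f lo by apply: mulr_gt0; [lra | exact: flo0].
      lra.
    have : 0 < (T - lo) * f hi by apply: mulr_gt0; [lra | exact: fhi0].
    lra.
  lra.
rewrite pmulr_lgt0 //; lra.
Qed.

Lemma final_pure (m : nat) (t t' : rat) : (2 <= m)%N -> 4 <= t -> t <= t' ->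
  let E := ((2 * m + 1)%N)%:R * t / ((2 * m + 5)%N)%:R in let e := ((2 * m + 3)%N)%:R * t' / ((2 * m + 7)%N)%:R in
  let a := ((2 * m + 3)%N)%:R * ((2 * m + 7)%N)%:R in
  [/\ 2 < E, 4 * E ^+ 2 < a * (E - 1) * (e - E) & 2 * a + 16 < a * e].
Proof.
move=> hm ht htt E e a.
have hM : 2 <= m%:R :> rat by rewrite (ler_nat _ 2 m).
have p5 : 0 < ((2 * m + 5)%N)%:R :> rat by rewrite ltr0n addn_gt0 orbT.
have p7 : 0 < ((2 * m + 7)%N)%:R :> rat by rewrite ltr0n addn_gt0 orbT.
have hE : E * ((2 * m + 5)%N)%:R = ((2 * m + 1)%N)%:R * t by rewrite /E divfK // gt_eqF.
have he : e * ((2 * m + 7)%N)%:R = ((2 * m + 3)%N)%:R * t' by rewrite /e divfK // gt_eqF.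
have hE2 : 2 < E.
  rewrite /E ltr_pdivlMr //. nra.
have key : 8 * t <= ((2 * m + 5)%N)%:R * ((2 * m + 7)%N)%:R * (e - E).
  have -> : ((2 * m + 5)%N)%:R * ((2 * m + 7)%N)%:R * (e - E) = ((2 * m + 5)%N)%:R * (e * ((2 * m + 7)%N)%:R) - ((2 * m + 7)%N)%:R * (E * ((2 * m + 5)%N)%:R) :> rat by ring.
  rewrite he hE. nra.
split => //.
  have h1 : 2 * ((2 * m + 3)%N)%:R < E * ((2 * m + 5)%N)%:R by rewrite hE; nra.
  have h2 : 4 * E ^+ 2 * ((2 * m + 5)%N)%:R < a * (E - 1) * (e - E) * ((2 * m + 5)%N)%:R.
    have -> : a * (E - 1) * (e - E) * ((2 * m + 5)%N)%:R = ((2 * m + 3)%N)%:R * (E - 1) * (((2 * m + 5)%N)%:R * ((2 * m + 7)%N)%:R * (e - E)) by rewrite /a; ring.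
    have -> : 4 * E ^+ 2 * ((2 * m + 5)%N)%:R = 4 * E * (E * ((2 * m + 5)%N)%:R) by ring.
    rewrite hE.
    have h3 : 0 <= ((2 * m + 3)%N)%:R * (E - 1) by apply: mulr_ge0; [rewrite ler0n | lra].
    have h4 := ler_wpM2l h3 key.
    have : 4 * E * (((2 * m + 1)%N)%:R * t) < ((2 * m + 3)%N)%:R * (E - 1) * (8 * t).
      rewrite -subr_gt0.
      have -> : ((2 * m + 3)%N)%:R * (E - 1) * (8 * t) - 4 * E * (((2 * m + 1)%N)%:R * t) = 4 * t * (E * ((2 * m + 5)%N)%:R - 2 * ((2 * m + 3)%N)%:R) by ring.
      apply: mulr_gt0; lra.
    lra.
  have p5' : 0 < ((2 * m + 5)%N)%:R :> rat := p5.
  rewrite -(ltr_pM2r p5'); exact: h2.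
have he2 : ((2 * m + 3)%N)%:R * t <= e * ((2 * m + 7)%N)%:R.
  rewrite he; apply: ler_wpM2l => //; rewrite ler0n.
rewrite /a; nra.
Qed.

Lemma D2 : D 2 = 13%:R.
Proof. rewrite Drec' D1 D0. by field. Qed.
Lemma D3 : D 3 = 63%:R.
Proof. rewrite Drec' D2 D1. by field. Qed.
Lemma D4 : D 4 = 321%:R.
Proof. rewrite Drec' D3 D2. by field. Qed.

Lemma Rrel' n : Rseq n.+1 = (((2 * n + 3)%N)%:R * Rseq n + D n + D n.+1) / ((2 * n + 1)%N)%:R.
Proof.
have h := Rrel n.
have hn : ((2 * n + 1)%N)%:R != 0 :> rat by rewrite pnatr_eq0 addn1.
apply: (mulIf hn); rewrite divfK // -h mulrC //.
Qed.

Lemma R3 : Rseq 3 = 25%:R.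
Proof.
rewrite Rrel' Rrel' Rrel' R0 D3 D2 D1 D0. by field.
Qed.

Definition P n := D n + D n.+1.
Definition s n := P n.+1 / P n.
Definition e n := P n / (((2 * n + 1) * (2 * n + 3))%N)%:R.
Definition T n := Rseq n / ((2 * n + 1)%N)%:R.

Lemma Ppos n : 0 < P n.
Proof. have := Dpos n; have := Dpos n.+1; rewrite /P; lra. Qed.

Lemma Dlc n : D n.+1 * D n.+1 <= D n * D n.+2.
Proof.
have [_ h] := xmono n.
move: h; rewrite /x ler_pdivrMr ?Dpos // mulrAC ler_pdivlMr ?Dpos //.
by rewrite [D n.+2 * _]mulrC.
Qed.

Lemma Pmono n : P n.+1 * P n.+1 <= P n * P n.+2.
Proof.
have h1 := Dlc n. have h2 := Dlc n.+1.
have a0 := Dpos n. have a1 := Dpos n.+1. have a2 := Dpos n.+2. have a3 := Dpos n.+3.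
have h3 : D n.+1 * D n.+2 <= D n * D n.+3.
  have : (D n.+1 * D n.+2) * (D n.+1 * D n.+2) <= (D n * D n.+3) * (D n.+1 * D n.+2).
    have -> : (D n * D n.+3) * (D n.+1 * D n.+2) = (D n * D n.+2) * (D n.+1 * D n.+3) by ring.
    have -> : (D n.+1 * D n.+2) * (D n.+1 * D n.+2) = (D n.+1 * D n.+1) * (D n.+2 * D n.+2) by ring.
    apply: ler_pM => //; apply: mulr_ge0; lra.
  rewrite ler_pM2r //; apply: mulr_gt0 => //.
rewrite /P; nra.
Qed.

Lemma smono n : s n <= s n.+1.
Proof.
have := Pmono n.
rewrite /s ler_pdivrMr ?Ppos // mulrAC ler_pdivlMr ?Ppos //.
by rewrite [P n.+2 * _]mulrC.
Qed.

Lemma s_ge4 n : 4 <= s n.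
Proof.
elim: n => [|n IH]; last by have := smono n; lra.
rewrite /s /P D2 D1 D0 ler_pdivlMr; last lra.
lra.
Qed.

Lemma erat n : e n.+1 = (((2 * n + 1)%N)%:R * s n / ((2 * n + 5)%N)%:R) * e n.
Proof.
rewrite /e /s.
have hP := Ppos n.
have h1 : ((2 * n + 5)%N)%:R != 0 :> rat by rewrite pnatr_eq0 addn_eq0 andbF.
have h2 : ((2 * n + 1)%N)%:R != 0 :> rat by rewrite pnatr_eq0 addn_eq0 andbF.
have h3 : ((2 * n + 3)%N)%:R != 0 :> rat by rewrite pnatr_eq0 addn_eq0 andbF.
rewrite !natrM.
have -> : ((2 * n.+1 + 1)%N)%:R = ((2 * n + 3)%N)%:R :> rat by congr _%:R; lia.
have -> : ((2 * n.+1 + 3)%N)%:R = ((2 * n + 5)%N)%:R :> rat by congr _%:R; lia.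
field.
have hN : 0 <= n%:R :> rat by rewrite ler0n.
by rewrite !gt_eqF //; lra.
Qed.

Lemma epos n : 0 < e n.
Proof. rewrite /e; apply: divr_gt0; [exact: Ppos | by rewrite ltr0n muln_gt0 !addn_gt0 !orbT]. Qed.

Lemma Trec n : T n.+1 = T n + e n.
Proof.
rewrite /T /e Rrel' /P.
have h1 : ((2 * n + 1)%N)%:R != 0 :> rat by rewrite pnatr_eq0 addn_eq0 andbF.
have h3 : ((2 * n + 3)%N)%:R != 0 :> rat by rewrite pnatr_eq0 addn_eq0 andbF.
have -> : ((2 * n.+1 + 1)%N)%:R = ((2 * n + 3)%N)%:R :> rat by congr _%:R; lia.
rewrite natrM. field.
have hN : 0 <= n%:R :> rat by rewrite ler0n.
by rewrite !gt_eqF //; lra.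
Qed.


Lemma inv_step (u v w T : rat) : 0 < u -> 2 * u < v -> 2 * v < w -> v * v <= u * w ->
  0 < T -> T <= v -> u * v <= T * (v - u) ->
  [/\ 0 < T + v, T + v <= w & v * w <= (T + v) * (w - v)].
Proof.
move=> hu huv hvw hlc hT hTv hinv.
split; [lra | lra |].
have h1 : v * v <= (T + v) * (v - u) by nra.
have h2 : v * w * (v - u) <= (T + v) * (w - v) * (v - u).
  have : v * w * (v - u) <= v * v * (w - v) by nra.
  have : v * v * (w - v) <= (T + v) * (v - u) * (w - v) by apply: ler_wpM2r; lra.
  lra.
rewrite ler_pM2r in h2; lra.
Qed.

Lemma T3 : T 3 = 25%:R / 7%:R.
Proof. by rewrite /T R3. Qed.

Lemma e2 : e 2 = 76%:R / 35%:R.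
Proof. rewrite /e /P D2 D3. by field. Qed.

Lemma e3 : e 3 = 384%:R / 63%:R.
Proof. rewrite /e /P D3 D4. by field. Qed.

Lemma ratios m : (2 <= m)%N ->
  let E := ((2 * m + 1)%N)%:R * s m / ((2 * m + 5)%N)%:R in
  let ee := ((2 * m + 3)%N)%:R * s m.+1 / ((2 * m + 7)%N)%:R in
  let a := ((2 * m + 3)%N)%:R * ((2 * m + 7)%N)%:R in
  [/\ 2 < E, 4 * E ^+ 2 < a * (E - 1) * (ee - E) & 2 * a + 16 < a * ee].
Proof. move=> hm; exact: final_pure hm (s_ge4 m) (smono m). Qed.

Lemma inv m : (2 <= m)%N ->
  [/\ 0 < T m.+1, T m.+1 <= e m.+1 & e m * e m.+1 <= T m.+1 * (e m.+1 - e m)].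
Proof.
move=> /subnK <-; elim: (m - 2)%N => [|k IH].
  rewrite /= T3 e2 e3; split; lra.
have hm : (2 <= k + 2)%N by lia.
have hm1 : (2 <= (k + 2).+1)%N by lia.
case: (ratios (k + 2) hm) => hE hlo _.
case: (ratios (k + 2).+1 hm1) => hE' _ _.
rewrite addSn.
have ef1 := erat (k + 2). have ef2 := erat (k + 2).+1.
set E := ((2 * (k + 2) + 1)%N)%:R * s (k + 2) / ((2 * (k + 2) + 5)%N)%:R in hE hlo ef1.
set E' := ((2 * (k + 2).+1 + 1)%N)%:R * s (k + 2).+1 / ((2 * (k + 2).+1 + 5)%N)%:R in hE' ef2.
set ee := ((2 * (k + 2) + 3)%N)%:R * s (k + 2).+1 / ((2 * (k + 2) + 7)%N)%:R in hlo.
have hee : ee = E'.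
  rewrite /ee /E'; congr (_%:R * _ / _%:R); lia.
rewrite -hee in ef2.
have hu := epos (k + 2).
have hv := epos (k + 2).+1.
have hw := epos (k + 2).+2.
have hEe : E < ee.
  have : 0 < ((2 * (k + 2) + 3)%N)%:R * ((2 * (k + 2) + 7)%N)%:R * (E - 1) :> rat.
    apply: mulr_gt0; [by apply: mulr_gt0; rewrite ltr0n addn_gt0 orbT | lra].
  nra.
case: IH => IH1 IH2 IH3.
rewrite Trec.
apply: (inv_step (e (k + 2)) (e (k + 2).+1) (e (k + 2).+2) (T (k + 2).+1)) => //.
- rewrite ef1; nra.
- rewrite ef2; rewrite -hee in hE'; rewrite hee; nra.
- rewrite ef2 ef1; nra.
Qed.

Lemma Rform n : Rseq n = ((2 * n + 1)%N)%:R * T n.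
Proof.
have h : ((2 * n + 1)%N)%:R != 0 :> rat by rewrite pnatr_eq0 addn1.
by rewrite /T mulrC divfK.
Qed.

Lemma logc m : (2 <= m)%N -> Rseq m.+2 ^+ 2 < Rseq m.+1 * Rseq m.+3.
Proof.
move=> hm.
case: (inv m hm) => h1 h2 h3.
case: (ratios m hm) => hE hlo hhi.
set E := ((2 * m + 1)%N)%:R * s m / ((2 * m + 5)%N)%:R in hE hlo hhi.
set ee := ((2 * m + 3)%N)%:R * s m.+1 / ((2 * m + 7)%N)%:R in hlo hhi.
set a := ((2 * m + 3)%N)%:R * ((2 * m + 7)%N)%:R in hlo hhi.
have ef1 : e m.+1 = E * e m := erat m.
have ef2 : e m.+2 = ee * e m.+1.
  rewrite erat; congr (_ * _); rewrite /ee; congr (_%:R * _ / _%:R); lia.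
have ha : 0 < a by rewrite /a; apply: mulr_gt0; rewrite ltr0n addn_gt0 orbT.
have := concave_pos a (e m) E ee (T m.+1) ha (epos m) hE hlo hhi.
rewrite -ef1 -ef2.
move=> /(_ h2 h3) H.
rewrite !Rform (Trec m.+2) (Trec m.+1).
rewrite /a in H; lra.
Qed.

Theorem theorem4p1 :
  strictly_log_convex_from 4 Rseq /\
  (forall n, (3 <= n)%N -> Rseq n.+1 / Rseq n < Rseq n.+2 / Rseq n.+1).
Proof.
have Rpos : forall n, (3 <= n)%N -> 0 < Rseq n.
  case=> [|m] hm //.
  have hm2 : (2 <= m)%N by lia.
  case: (inv m hm2) => h1 _ _.
  rewrite Rform; apply: mulr_gt0 => //; by rewrite ltr0n addn1.
split; [split|].
- move=> n hn; apply: Rpos; lia.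
- case=> [|[|m]] hm //=.
  have hm2 : (2 <= m)%N by lia.
  exact: logc m hm2.
- case=> [|m] hm //.
  have hm2 : (2 <= m)%N by lia.
  have p1 : 0 < Rseq m.+1 by apply: Rpos; lia.
  have p2 : 0 < Rseq m.+2 by apply: Rpos; lia.
  rewrite ltr_pdivrMr // mulrAC ltr_pdivlMr //.
  have := logc m hm2.
  by rewrite expr2 [Rseq m.+3 * _]mulrC.
Qed.
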